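(* Assume (H1) and (H2), and fix $\alpha_0>0$. Then for all $f_2,f_2^*\in\mathcal M$, $$\|W^{\alpha_0}(f_2)-W^{\alpha_0}(f_2^* )\|\le \widehat\varphi(\alpha_0)\,\|f_2-f_2^*\|,$$ where $\widehat\varphi(\alpha_0):=2L_{2M}\beta\,\alpha_0^{\beta}\,\bar F_2(\alpha_0)\exp\!\Big(\frac{aN_{2M}}{L_{2m}(\beta-\sigma-1)}\frac{1}{\alpha_0^{\beta-\sigma-2}}\Big)$.
   Context: Fix a constant $a>0$. For $\alpha_0>0$: $C_b[\alpha_0,\infty)$ is the Banach space of bounded continuous real functions on $[\alpha_0,\infty)$ with norm $\|f\|=\sup_{[\alpha_0,\infty)}|f|$, and $\mathcal M=\{f\in C_b[\alpha_0,\infty): f(\alpha_0)=0,\ \lim_{\xi\to\infty}f(\xi)=-1\}$. We are given maps $L^*,N^*$ assigning to each $f_2\in\mathcal M$ positive continuous functions $L^*(f_2),N^*(f_2)$ on $[\alpha_0,\infty)$. Define, for $\xi\ge\alpha_0$ (including $\xi=\infty$ as an improper integral): $E_2(\alpha_0,\xi,f_2)=\exp\big(-\alpha_0 a\int_{\alpha_0}^{\xi}\frac{N^*(f_2)(s)}{L^*(f_2)(s)}ds\big)$, $F_2(\alpha_0,\xi,f_2)=\int_{\alpha_0}^{\xi}\frac{E_2(\alpha_0,s,f_2)}{s\,L^*(f_2)(s)}ds$, and the operator $W^{\alpha_0}(f_2)(\xi)=-\frac{F_2(\alpha_0,\xi,f_2)}{F_2(\alpha_0,\infty,f_2)}$,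 $\xi\ge\alpha_0$. Hypothesis (H1) (the part used here): there are positive constants $\beta,\sigma,L_{2m},L_{2M},N_{2m},N_{2M}$ with $\beta>\sigma+2$ such that for all $\alpha_0>0$, all $f_2\in\mathcal M$ and all $\xi\ge\alpha_0$: $L_{2m}\xi^{\beta}\le L^*(f_2)(\xi)\le L_{2M}\xi^{\beta}$ and $N_{2m}\xi^{\sigma}\le N^*(f_2)(\xi)\le N_{2M}\xi^{\sigma}$. Hypothesis (H2) (the part used here): there are constants $\bar L_2,\bar N_2\ge0$ such that for all $\alpha_0>0$ and all $f_2,f_2^*\in\mathcal M$: $\sup_{s\ge\alpha_0}|L^*(f_2)(s)-L^*(f_2^* )(s)|\le\bar L_2\|f_2-f_2^*\|$ and $\sup_{s\ge\alpha_0}|N^*(f_2)(s)-N^*(f_2^* )(s)|\le\bar N_2\|f_2-f_2^*\|$. For $z>0$, $\bar F_2(z)=\frac{za}{\beta L_{2m}^2}\Big[\frac{\bar N_2}{\beta-1}\frac{1}{z^{\beta-1}}+\frac{\bar L_2N_{2M}}{L_{2m}(2\beta-\sigma-1)}\frac{1}{z^{2\beta-\sigma-1}}\Big]\frac{1}{z^{\beta}}+\frac{\bar L_2}{2\beta L_{2m}^2}\frac{1}{z^{2\beta}}$. *)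

(* Defs.v *)
From Stdlib Require Import Reals.
From Coquelicot Require Import Coquelicot.
Open Scope R_scope.

Definition contOn (a0 : R) (f : R -> R) : Prop :=
  forall x, a0 <= x ->
    filterlim f (within (fun y => a0 <= y) (locally x)) (locally (f x)).

Definition boundedOn (a0 : R) (f : R -> R) : Prop :=
  exists B, forall x, a0 <= x -> Rabs (f x) <= B.

Definition Cb (a0 : R) (f : R -> R) : Prop := contOn a0 f /\ boundedOn a0 f.

Definition inM (a0 : R) (f : R -> R) : Prop :=
  Cb a0 f /\ f a0 = 0 /\ filterlim f (Rbar_locally p_infty) (locally (-1)).

Definition supnorm (a0 : R) (f : R -> R) : R :=
  real (Lub_Rbar (fun y => exists x, a0 <= x /\ y = Rabs (f x))).

Section Ops.
Variables (a : R) (LS NS : (R -> R) -> (R -> R)).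

Definition E2 (a0 xi : R) (f2 : R -> R) : R :=
  exp (- (a0 * a * RInt (fun s => NS f2 s / LS f2 s) a0 xi)).

Definition F2 (a0 xi : R) (f2 : R -> R) : R :=
  RInt (fun s => E2 a0 s f2 / (s * LS f2 s)) a0 xi.

Definition F2inf (a0 : R) (f2 : R -> R) : R :=
  real (Lim (fun xi => F2 a0 xi f2) p_infty).

Definition W (a0 : R) (f2 : R -> R) (xi : R) : R :=
  - (F2 a0 xi f2 / F2inf a0 f2).
End Ops.

Definition barF2 (a beta sigma L2m N2M barL2 barN2 z : R) : R :=
  z * a / (beta * L2m ^ 2) *
    (barN2 / (beta - 1) * / Rpower z (beta - 1)
     + barL2 * N2M / (L2m * (2 * beta - sigma - 1)) * / Rpower z (2 * beta - sigma - 1))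
    * / Rpower z beta
  + barL2 / (2 * beta * L2m ^ 2) * / Rpower z (2 * beta).

Definition phihat (a beta sigma L2m L2M N2M barL2 barN2 a0 : R) : R :=
  2 * L2M * beta * Rpower a0 beta * barF2 a beta sigma L2m N2M barL2 barN2 a0
  * exp (a * N2M / (L2m * (beta - sigma - 1)) * / Rpower a0 (beta - sigma - 2)).

(* Main.v *)
Require Import Defs.
From Stdlib Require Import Reals Lra Classical.
From Coquelicot Require Import Coquelicot.
Open Scope R_scope.

Lemma Rpower_cont p s : 0 < s -> continuous (fun t => Rpower t p) s.
Proof.
intros Hs. apply (ex_derive_continuous (K:=R_AbsRing) (V:=R_NormedModule)). exists (p * Rpower s (p-1)).
apply is_derive_Reals. apply derivable_pt_lim_power; auto.
Qed.

Lemma pow_is_int p a0 x : 1 < p -> 0 < a0 -> a0 <= x ->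
  is_RInt (fun s => Rpower s (-p)) a0 x ((Rpower x (1-p) - Rpower a0 (1-p)) / (1-p)).
Proof.
intros Hp Ha Hx.
assert (E : (Rpower x (1-p) - Rpower a0 (1-p)) / (1-p) =
   minus ((fun s => Rpower s (1-p) / (1-p)) x) ((fun s => Rpower s (1-p) / (1-p)) a0)).
{ unfold minus, plus, opp; simpl. field. lra. }
rewrite E. apply (is_RInt_derive (V:=R_CompleteNormedModule) (fun s => Rpower s (1-p) / (1-p))).
- intros s Hs. rewrite Rmin_left in Hs by lra. rewrite Rmax_right in Hs by lra.
  apply is_derive_Reals.
  replace (Rpower s (-p)) with ((1-p) * Rpower s (1-p-1) / (1-p)).
  2:{ replace (1-p-1) with (-p) by ring. field. lra. }
  unfold Rdiv. apply derivable_pt_lim_scal_right. apply derivable_pt_lim_power. lra.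
- intros s Hs. rewrite Rmin_left in Hs by lra. rewrite Rmax_right in Hs by lra.
  apply Rpower_cont. lra.
Qed.

Lemma Rpower_pos x y : 0 < Rpower x y.
Proof. unfold Rpower. apply exp_pos. Qed.

Lemma Rpower_neg x p : Rpower x (1-p) = / Rpower x (p-1).
Proof. replace (1-p) with (-(p-1)) by ring. apply Rpower_Ropp. Qed.

Lemma int_bound2 g a0 x c1 c2 p1 p2 : 1<p1 -> 1<p2 -> 0<a0 -> a0<=x -> 0<=c1 -> 0<=c2 ->
  ex_RInt g a0 x ->
  (forall s, a0 < s < x -> Rabs (g s) <= c1 * Rpower s (-p1) + c2 * Rpower s (-p2)) ->
  Rabs (RInt g a0 x) <= c1 / ((p1-1)*Rpower a0 (p1-1)) + c2 / ((p2-1)*Rpower a0 (p2-1)).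
Proof.
intros H1 H2 Ha Hx Hc1 Hc2 Hg Hb.
set (v1 := (Rpower x (1-p1) - Rpower a0 (1-p1)) / (1-p1)).
set (v2 := (Rpower x (1-p2) - Rpower a0 (1-p2)) / (1-p2)).
assert (HB : is_RInt (fun s => c1 * Rpower s (-p1) + c2 * Rpower s (-p2)) a0 x (c1*v1 + c2*v2)).
{ apply (is_RInt_plus (fun s => c1 * Rpower s (-p1)) (fun s => c2 * Rpower s (-p2))).
  - apply (is_RInt_scal (fun s => Rpower s (-p1))). apply pow_is_int; auto.
  - apply (is_RInt_scal (fun s => Rpower s (-p2))). apply pow_is_int; auto. }
assert (HBo : is_RInt (fun s => - (c1 * Rpower s (-p1) + c2 * Rpower s (-p2))) a0 x (- (c1*v1 + c2*v2))).
{ apply (is_RInt_opp (fun s => c1 * Rpower s (-p1) + c2 * Rpower s (-p2))). exact HB. }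
assert (Hv1 : v1 <= / ((p1-1)*Rpower a0 (p1-1))).
{ unfold v1. rewrite !Rpower_neg.
  pose proof (Rpower_pos x (p1-1)). pose proof (Rpower_pos a0 (p1-1)).
  replace ((/ Rpower x (p1 - 1) - / Rpower a0 (p1 - 1)) / (1 - p1)) with
     (/ ((p1-1)*Rpower a0 (p1-1)) - / ((p1-1)* Rpower x (p1-1))) by (field; lra).
  assert (0 < / ((p1-1)* Rpower x (p1-1))) by (apply Rinv_0_lt_compat; nra). lra. }
assert (Hv2 : v2 <= / ((p2-1)*Rpower a0 (p2-1))).
{ unfold v2. rewrite !Rpower_neg.
  pose proof (Rpower_pos x (p2-1)). pose proof (Rpower_pos a0 (p2-1)).
  replace ((/ Rpower x (p2 - 1) - / Rpower a0 (p2 - 1)) / (1 - p2)) with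
     (/ ((p2-1)*Rpower a0 (p2-1)) - / ((p2-1)* Rpower x (p2-1))) by (field; lra).
  assert (0 < / ((p2-1)* Rpower x (p2-1))) by (apply Rinv_0_lt_compat; nra). lra. }
assert (Hup : RInt g a0 x <= c1*v1 + c2*v2).
{ rewrite <- (is_RInt_unique _ _ _ _ HB). apply RInt_le; auto.
  eexists; exact HB. intros s Hs. specialize (Hb s Hs). apply Rabs_le_between in Hb; lra. }
assert (Hlo : - (c1*v1 + c2*v2) <= RInt g a0 x).
{ rewrite <- (is_RInt_unique _ _ _ _ HBo). apply RInt_le; auto.
  eexists; exact HBo. intros s Hs. specialize (Hb s Hs). apply Rabs_le_between in Hb; lra. }
assert (c1 * v1 <= c1 / ((p1-1)*Rpower a0 (p1-1))) by (unfold Rdiv; apply Rmult_le_compat_l; lra).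
assert (c2 * v2 <= c2 / ((p2-1)*Rpower a0 (p2-1))) by (unfold Rdiv; apply Rmult_le_compat_l; lra).
apply Rabs_le; lra.
Qed.

Lemma Rmax_lip s z c : Rabs (Rmax s c - Rmax z c) <= Rabs (s - z).
Proof.
unfold Rmax; destruct (Rle_dec s c), (Rle_dec z c);
unfold Rabs; repeat destruct Rcase_abs; lra.
Qed.

Lemma cont_ext a0 f : contOn a0 f -> forall z, continuous (fun s => f (Rmax s a0)) z.
Proof.
intros Hf z. unfold continuous.
eapply filterlim_comp; [|apply Hf; apply Rmax_r].
intros P [eps HP]. exists eps. intros s Hs. apply HP.
- change (Rabs (Rmax s a0 - Rmax z a0) < eps).
  eapply Rle_lt_trans; [apply Rmax_lip|]. exact Hs.
- apply Rmax_r.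
Qed.

Definition rX a0 (L N : R->R) s := N (Rmax s a0) / L (Rmax s a0).
Definition GX a0 L N x := RInt (rX a0 L N) a0 x.
Definition EX a a0 L N s := exp (-(a0*a*GX a0 L N s)).
Definition qX a a0 L N s := EX a a0 L N s / (Rmax s a0 * L (Rmax s a0)).

Lemma rX_cont a0 L N : contOn a0 L -> contOn a0 N -> (forall x, a0<=x -> 0 < L x) ->
  forall z, continuous (rX a0 L N) z.
Proof.
intros HL HN Hp z. unfold rX, Rdiv.
apply (continuous_mult (fun s => N (Rmax s a0)) (fun s => / L (Rmax s a0))).
- apply cont_ext; auto.
- apply continuous_Rinv_comp. apply cont_ext; auto.
  apply Rgt_not_eq, Hp, Rmax_r.
Qed.

Lemma GX_cont a0 L N : contOn a0 L -> contOn a0 N -> (forall x, a0<=x -> 0 < L x) ->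
  forall z, continuous (GX a0 L N) z.
Proof.
intros HL HN Hp z.
apply (continuous_RInt_1 (V:=R_NormedModule) (rX a0 L N) a0 z (GX a0 L N)).
apply filter_forall. intros y. apply (RInt_correct (V:=R_CompleteNormedModule)).
apply (ex_RInt_continuous (V:=R_CompleteNormedModule)). intros; apply rX_cont; auto.
Qed.

Lemma qX_cont a a0 L N : 0 < a0 -> contOn a0 L -> contOn a0 N -> (forall x, a0<=x -> 0 < L x) ->
  forall z, continuous (qX a a0 L N) z.
Proof.
intros Ha HL HN Hp z. unfold qX, Rdiv, EX.
apply (continuous_mult (fun s => exp (- (a0 * a * GX a0 L N s))) (fun s => / (Rmax s a0 * L (Rmax s a0)))).
- apply continuous_exp_comp.
  apply (continuous_opp (V:=R_NormedModule) (fun s => a0 * a * GX a0 L N s)).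
  apply (continuous_mult (fun s => a0 * a) (GX a0 L N)).
  apply continuous_const. apply GX_cont; auto.
- apply continuous_Rinv_comp.
  apply (continuous_mult (fun s => Rmax s a0) (fun s => L (Rmax s a0))).
  apply (cont_ext a0 (fun s => s)). intros x _. apply filterlim_filter_le_1 with (2:=continuous_id x).
  intros P HP. apply filter_le_within. auto.
  apply cont_ext; auto.
  apply Rgt_not_eq. apply Rmult_lt_0_compat. pose proof (Rmax_r z a0); lra. apply Hp, Rmax_r.
Qed.

Lemma qX_int a a0 L N x : 0 < a0 -> contOn a0 L -> contOn a0 N -> (forall x, a0<=x -> 0 < L x) ->
  ex_RInt (qX a a0 L N) a0 x.
Proof.
intros. apply (ex_RInt_continuous (V:=R_CompleteNormedModule)). intros; apply qX_cont; auto.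
Qed.

Lemma rX_int a0 L N x : contOn a0 L -> contOn a0 N -> (forall x, a0<=x -> 0 < L x) ->
  ex_RInt (rX a0 L N) a0 x.
Proof.
intros. apply (ex_RInt_continuous (V:=R_CompleteNormedModule)). intros; apply rX_cont; auto.
Qed.

Lemma F2_eq a LS NS a0 f x : a0 <= x ->
  F2 a LS NS a0 x f = RInt (qX a a0 (LS f) (NS f)) a0 x.
Proof.
intros Hx. unfold F2. apply RInt_ext. intros t Ht.
rewrite Rmin_left in Ht by lra. rewrite Rmax_right in Ht by lra.
unfold qX, EX, E2, GX. rewrite Rmax_left by lra. do 4 f_equal.
apply RInt_ext. intros u Hu.
rewrite Rmin_left in Hu by lra. rewrite Rmax_right in Hu by lra.
unfold rX. rewrite Rmax_left by lra. reflexivity.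
Qed.

Lemma exp_le x y : x <= y -> exp x <= exp y.
Proof. intros [H|H]. left; apply exp_increasing; auto. subst; lra. Qed.

Lemma pw_a s b c : 0 < s -> Rpower s c * / Rpower s b = Rpower s (-(b-c)).
Proof. intros. replace (-(b-c)) with (c + - b) by ring. rewrite Rpower_plus, Rpower_Ropp. auto. Qed.

Lemma pw_b s b : 0 < s -> / (s * Rpower s b) = Rpower s (-(b+1)).
Proof. intros. replace (-(b+1)) with (- (1 + b)) by ring. rewrite Rpower_Ropp, Rpower_plus, Rpower_1; auto. Qed.

Lemma pw_c s b c : 0 < s -> Rpower s c * / (Rpower s b * Rpower s b) = Rpower s (-(2*b-c)).
Proof. intros. replace (-(2*b-c)) with (c + - (b + b)) by ring. rewrite Rpower_plus, Rpower_Ropp, Rpower_plus. auto. Qed.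

Lemma pw_d s b : 0 < s -> / (s * (Rpower s b * Rpower s b)) = Rpower s (-(2*b+1)).
Proof. intros. replace (-(2*b+1)) with (- (1 + (b + b))) by ring.
rewrite Rpower_Ropp, !Rpower_plus, Rpower_1; auto. Qed.

Lemma exp_lip u v : 0 <= u -> 0 <= v -> Rabs (exp (-u) - exp (-v)) <= Rabs (u - v).
Proof.
assert (K : forall u v, 0 <= u <= v -> 0 <= exp (-u) - exp (-v) <= v - u).
{ intros x y [Hx Hxy]. split.
  - pose proof (exp_le (-y) (-x)). lra.
  - replace (exp (-x) - exp (-y)) with (exp (-x) * (1 - exp (x - y))).
    2:{ replace (-y) with (-x + (x - y)) by ring. rewrite exp_plus. ring. }
    pose proof (exp_ineq1_le (x - y)). pose proof (exp_pos (x-y)).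
    pose proof (exp_le (-x) 0 ltac:(lra)) as E1. rewrite exp_0 in E1.
    pose proof (exp_le (x-y) 0 ltac:(lra)) as E2. rewrite exp_0 in E2.
    pose proof (exp_pos (-x)).
    assert (0 <= 1 - exp (x - y) <= y - x) by lra.
    nra. }
intros Hu Hv. destruct (Rle_dec u v).
- specialize (K u v ltac:(lra)). rewrite Rabs_right by lra. rewrite Rabs_left1 by lra. lra.
- specialize (K v u ltac:(lra)). rewrite Rabs_left1 by lra. rewrite Rabs_right by lra. lra.
Qed.

Lemma r_pt a0 L N beta sigma L2m N2M s : 0 < a0 -> 0 < L2m -> a0 <= s ->
  0 < N s -> L2m * Rpower s beta <= L s -> N s <= N2M * Rpower s sigma ->
  0 <= rX a0 L N s <= N2M / L2m * Rpower s (-(beta-sigma)).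
Proof.
intros Ha HL Hs HN HLb HNb. unfold rX. rewrite Rmax_left by lra.
pose proof (Rpower_pos s beta). pose proof (Rpower_pos s sigma).
assert (0 < L s) by nra.
split. unfold Rdiv. apply Rmult_le_pos; [lra|left; apply Rinv_0_lt_compat; lra].
rewrite <- pw_a by lra.
apply Rle_trans with (N2M * Rpower s sigma / (L2m * Rpower s beta)).
- unfold Rdiv. apply Rmult_le_compat; try lra.
  left; apply Rinv_0_lt_compat; lra. apply Rinv_le_contravar; nra.
- right. field. split; lra.
Qed.

Definition K0 beta sigma L2m N2M a0 := N2M / L2m / ((beta-sigma-1)*Rpower a0 (beta-sigma-1)).

Lemma G_bd a0 L N beta sigma L2m N2M x : 0 < a0 -> 0 < L2m -> 0 < N2M -> beta > sigma + 2 -> a0 <= x ->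
  contOn a0 L -> contOn a0 N -> (forall x, a0<=x -> 0 < L x) -> (forall x, a0<=x -> 0 < N x) ->
  (forall x, a0 <= x -> L2m * Rpower x beta <= L x) -> (forall x, a0 <= x -> N x <= N2M * Rpower x sigma) ->
  0 <= GX a0 L N x <= K0 beta sigma L2m N2M a0.
Proof.
intros Ha HL HN Hbs Hx HLc HNc HLp HNp HLb HNb.
assert (Hpt : forall s, a0 < s < x -> 0 <= rX a0 L N s <= N2M / L2m * Rpower s (-(beta-sigma))).
{ intros s Hs. apply r_pt; auto; try lra. apply HNp; lra. apply HLb; lra. apply HNb; lra. }
split.
- apply RInt_ge_0; auto. apply rX_int; auto. intros s Hs; apply Hpt; auto.
- pose proof (int_bound2 (rX a0 L N) a0 x (N2M/L2m) 0 (beta-sigma) 2 ltac:(lra) ltac:(lra) Ha Hx) as H.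
  assert (0 <= N2M/L2m) by (unfold Rdiv; apply Rmult_le_pos; [lra|left; apply Rinv_0_lt_compat; lra]).
  specialize (H ltac:(lra) ltac:(lra) (rX_int _ _ _ _ HLc HNc HLp)).
  assert (Hb : Rabs (RInt (rX a0 L N) a0 x) <=
         N2M / L2m / ((beta - sigma - 1) * Rpower a0 (beta - sigma - 1)) +
         0 / ((2 - 1) * Rpower a0 (2 - 1))).
  { apply H. intros s Hs. specialize (Hpt s Hs). rewrite Rabs_right by lra. lra. }
  unfold Rdiv at 3 in Hb. rewrite Rmult_0_l, Rplus_0_r in Hb.
  unfold GX, K0. eapply Rle_trans; [apply Rle_abs|exact Hb].
Qed.

Lemma E_bd a a0 L N beta sigma L2m N2M s : 0 < a -> 0 < a0 -> 0 < L2m -> 0 < N2M -> beta > sigma + 2 -> a0 <= s ->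
  contOn a0 L -> contOn a0 N -> (forall x, a0<=x -> 0 < L x) -> (forall x, a0<=x -> 0 < N x) ->
  (forall x, a0 <= x -> L2m * Rpower x beta <= L x) -> (forall x, a0 <= x -> N x <= N2M * Rpower x sigma) ->
  exp (-(a0*a*K0 beta sigma L2m N2M a0)) <= EX a a0 L N s <= 1.
Proof.
intros. pose proof (G_bd a0 L N beta sigma L2m N2M s) as G. unfold EX.
destruct G as [G1 G2]; auto. split.
- apply exp_le. assert (0 < a0*a) by nra. nra.
- rewrite <- exp_0. apply exp_le. assert (0 < a0*a) by nra. nra.
Qed.

Lemma q_pt a a0 L N beta sigma L2m L2M N2M s : 0 < a -> 0 < a0 -> 0 < L2m -> 0 < N2M -> beta > sigma + 2 -> a0 <= s ->
  contOn a0 L -> contOn a0 N -> (forall x, a0<=x -> 0 < L x) -> (forall x, a0<=x -> 0 < N x) ->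
  (forall x, a0 <= x -> L2m * Rpower x beta <= L x /\ L x <= L2M * Rpower x beta) ->
  (forall x, a0 <= x -> N x <= N2M * Rpower x sigma) ->
  exp (-(a0*a*K0 beta sigma L2m N2M a0)) / L2M * Rpower s (-(beta+1)) <= qX a a0 L N s
  /\ qX a a0 L N s <= / L2m * Rpower s (-(beta+1)).
Proof.
intros Hpa Ha HL HN Hbs Hs HLc HNc HLp HNp HLb HNb.
pose proof (E_bd a a0 L N beta sigma L2m N2M s) as E.
destruct E as [E1 E2]; auto. intros; apply HLb; auto.
set (k := exp (-(a0*a*K0 beta sigma L2m N2M a0))) in *.
assert (Hk : 0 < k) by apply exp_pos.
unfold qX. rewrite Rmax_left by lra. rewrite <- pw_b by lra.
destruct (HLb s Hs) as [B1 B2]. pose proof (Rpower_pos s beta).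
assert (0 < L s) by nra.
assert (0 < L2M) by nra.
split.
- apply Rle_trans with (k / (s * (L2M * Rpower s beta))).
  + right. field. repeat split; lra.
  + unfold Rdiv. apply Rmult_le_compat; try lra.
    left; apply Rinv_0_lt_compat; apply Rmult_lt_0_compat; nra.
    apply Rinv_le_contravar; [apply Rmult_lt_0_compat; nra | apply Rmult_le_compat_l; lra].
- apply Rle_trans with (1 / (s * (L2m * Rpower s beta))).
  + unfold Rdiv. apply Rmult_le_compat; try lra.
    left; apply Rinv_0_lt_compat; apply Rmult_lt_0_compat; nra.
    apply Rinv_le_contravar; [apply Rmult_lt_0_compat; nra | apply Rmult_le_compat_l; lra].
  + right. field. repeat split; lra.
Qed.

Lemma div_bd x l l0 c : 0 < l0 -> l0 <= l -> Rabs x <= c -> Rabs (x / l) <= c / l0.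
Proof.
intros H0 H1 H2. unfold Rdiv. rewrite Rabs_mult, Rabs_inv, (Rabs_right l) by lra.
apply Rmult_le_compat; auto. apply Rabs_pos. left; apply Rinv_0_lt_compat; lra.
apply Rinv_le_contravar; lra.
Qed.

Lemma r_diff a0 L1 N1 L2 N2 beta sigma L2m N2M bL bN d s :
  0 < a0 -> 0 < L2m -> a0 <= s -> 0 <= d -> 0 <= bL -> 0 <= bN ->
  0 < N2 s -> L2m * Rpower s beta <= L1 s -> L2m * Rpower s beta <= L2 s -> N2 s <= N2M * Rpower s sigma ->
  Rabs (L1 s - L2 s) <= bL * d -> Rabs (N1 s - N2 s) <= bN * d ->
  Rabs (rX a0 L1 N1 s - rX a0 L2 N2 s) <=
    bN * d / L2m * Rpower s (-beta) + N2M * bL * d / L2m ^ 2 * Rpower s (-(2*beta-sigma)).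
Proof.
intros Ha HL Hs Hd HbL HbN HN2 HL1 HL2 HN2b HdL HdN.
unfold rX. rewrite !Rmax_left by lra.
pose proof (Rpower_pos s beta) as P. pose proof (Rpower_pos s sigma) as S.
assert (0 < L1 s) by nra. assert (0 < L2 s) by nra.
replace (N1 s / L1 s - N2 s / L2 s) with ((N1 s - N2 s) / L1 s + (N2 s * (L2 s - L1 s)) / (L1 s * L2 s))
  by (field; lra).
rewrite Rpower_Ropp, <- pw_c by lra.
eapply Rle_trans; [apply Rabs_triang|]. apply Rplus_le_compat.
- eapply Rle_trans. apply (div_bd _ _ (L2m * Rpower s beta) (bN*d)).
  apply Rmult_lt_0_compat; lra. lra. exact HdN.
  right. field. lra.
- assert (0 < L2m * Rpower s beta) by (apply Rmult_lt_0_compat; lra).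
  eapply Rle_trans. apply (div_bd _ _ ((L2m * Rpower s beta) * (L2m * Rpower s beta)) (N2M * Rpower s sigma * (bL*d))).
  apply Rmult_lt_0_compat; lra. apply Rmult_le_compat; lra.
  rewrite Rabs_mult, (Rabs_right (N2 s)) by lra. apply Rmult_le_compat; try lra. apply Rabs_pos.
  rewrite Rabs_minus_sym; auto.
  right. field. lra.
Qed.

Definition Dd beta sigma L2m N2M bL bN d a0 :=
  bN * d / L2m / ((beta-1)*Rpower a0 (beta-1)) +
  N2M * bL * d / L2m ^ 2 / ((2*beta-sigma-1)*Rpower a0 (2*beta-sigma-1)).

Lemma G_diff a0 L1 N1 L2 N2 beta sigma L2m N2M bL bN d x :
  0 < a0 -> 0 < L2m -> 0 < N2M -> beta > sigma + 2 -> sigma > 0 -> a0 <= x -> 0 <= d -> 0 <= bL -> 0 <= bN ->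
  contOn a0 L1 -> contOn a0 N1 -> (forall x, a0<=x -> 0 < L1 x) ->
  contOn a0 L2 -> contOn a0 N2 -> (forall x, a0<=x -> 0 < L2 x) -> (forall x, a0<=x -> 0 < N2 x) ->
  (forall x, a0 <= x -> L2m * Rpower x beta <= L1 x) ->
  (forall x, a0 <= x -> L2m * Rpower x beta <= L2 x) ->
  (forall x, a0 <= x -> N2 x <= N2M * Rpower x sigma) ->
  (forall x, a0 <= x -> Rabs (L1 x - L2 x) <= bL * d) ->
  (forall x, a0 <= x -> Rabs (N1 x - N2 x) <= bN * d) ->
  Rabs (GX a0 L1 N1 x - GX a0 L2 N2 x) <= Dd beta sigma L2m N2M bL bN d a0.
Proof.
intros Ha HL HN Hbs Hs Hx Hd HbL HbN HL1c HN1c HL1p HL2c HN2c HL2p HN2p HL1b HL2b HN2b HdL HdN.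
unfold GX.
assert (I1 := rX_int a0 L1 N1 x HL1c HN1c HL1p).
assert (I2 := rX_int a0 L2 N2 x HL2c HN2c HL2p).
assert (E : RInt (fun s => rX a0 L1 N1 s - rX a0 L2 N2 s) a0 x = RInt (rX a0 L1 N1) a0 x - RInt (rX a0 L2 N2) a0 x)
  by (apply (RInt_minus (V:=R_CompleteNormedModule)); auto).
rewrite <- E. unfold Dd.
apply int_bound2; try lra.
- unfold Rdiv; repeat apply Rmult_le_pos; try lra; left; apply Rinv_0_lt_compat; lra.
- unfold Rdiv; repeat apply Rmult_le_pos; try lra; left; apply Rinv_0_lt_compat; nra.
- apply (ex_RInt_minus (V:=R_NormedModule)); auto.
- intros s Hs'. apply r_diff; try lra; auto. apply HN2p; lra.
  apply HL1b; lra. apply HL2b; lra. apply HN2b; lra. apply HdL; lra. apply HdN; lra.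
Qed.

Lemma q_diff a a0 L1 N1 L2 N2 beta L2m bL d D s :
  0 < a0 -> 0 < L2m -> a0 <= s -> 0 <= d -> 0 <= bL ->
  L2m * Rpower s beta <= L1 s -> L2m * Rpower s beta <= L2 s ->
  Rabs (L1 s - L2 s) <= bL * d ->
  Rabs (EX a a0 L1 N1 s - EX a a0 L2 N2 s) <= a0*a*D -> 0 <= EX a a0 L2 N2 s <= 1 ->
  Rabs (qX a a0 L1 N1 s - qX a a0 L2 N2 s) <=
    a0*a*D / L2m * Rpower s (-(beta+1)) + bL * d / L2m ^ 2 * Rpower s (-(2*beta+1)).
Proof.
intros Ha HL Hs Hd HbL HL1 HL2 HdL HE HE2.
unfold qX. rewrite !Rmax_left by lra.
set (E1 := EX a a0 L1 N1 s) in *. set (E2 := EX a a0 L2 N2 s) in *.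
pose proof (Rpower_pos s beta) as P.
assert (0 < L2m * Rpower s beta) by (apply Rmult_lt_0_compat; lra).
assert (0 < L1 s) by lra. assert (0 < L2 s) by lra.
replace (E1 / (s * L1 s) - E2 / (s * L2 s)) with ((E1 - E2) / (s * L1 s) + (E2 * (L2 s - L1 s)) / (s * (L1 s * L2 s)))
  by (field; repeat split; lra).
rewrite <- pw_b, <- pw_d by lra.
eapply Rle_trans; [apply Rabs_triang|]. apply Rplus_le_compat.
- eapply Rle_trans. apply (div_bd _ _ (s * (L2m * Rpower s beta)) (a0*a*D)).
  apply Rmult_lt_0_compat; lra. apply Rmult_le_compat_l; lra. exact HE.
  right. field. split; lra.
- eapply Rle_trans. apply (div_bd _ _ (s * ((L2m * Rpower s beta) * (L2m * Rpower s beta))) (1 * (bL*d))).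
  apply Rmult_lt_0_compat; [lra|]. apply Rmult_lt_0_compat; lra.
  apply Rmult_le_compat_l; [lra|]. apply Rmult_le_compat; lra.
  rewrite Rabs_mult, (Rabs_right E2) by lra. apply Rmult_le_compat; try lra. apply Rabs_pos.
  rewrite Rabs_minus_sym; auto.
  right. field. split; lra.
Qed.

Definition Cc a beta sigma L2m N2M bL bN d a0 :=
  a0*a*Dd beta sigma L2m N2M bL bN d a0 / L2m / ((beta+1-1)*Rpower a0 (beta+1-1)) +
  bL * d / L2m ^ 2 / ((2*beta+1-1)*Rpower a0 (2*beta+1-1)).

Lemma F_diff a a0 L1 N1 L2 N2 beta sigma L2m N2M bL bN d x :
  0 < a -> 0 < a0 -> 0 < L2m -> 0 < N2M -> beta > sigma + 2 -> sigma > 0 -> a0 <= x -> 0 <= d -> 0 <= bL -> 0 <= bN ->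
  contOn a0 L1 -> contOn a0 N1 -> (forall x, a0<=x -> 0 < L1 x) -> (forall x, a0<=x -> 0 < N1 x) ->
  contOn a0 L2 -> contOn a0 N2 -> (forall x, a0<=x -> 0 < L2 x) -> (forall x, a0<=x -> 0 < N2 x) ->
  (forall x, a0 <= x -> L2m * Rpower x beta <= L1 x) ->
  (forall x, a0 <= x -> L2m * Rpower x beta <= L2 x) ->
  (forall x, a0 <= x -> N1 x <= N2M * Rpower x sigma) ->
  (forall x, a0 <= x -> N2 x <= N2M * Rpower x sigma) ->
  (forall x, a0 <= x -> Rabs (L1 x - L2 x) <= bL * d) ->
  (forall x, a0 <= x -> Rabs (N1 x - N2 x) <= bN * d) ->
  Rabs (RInt (qX a a0 L1 N1) a0 x - RInt (qX a a0 L2 N2) a0 x) <= Cc a beta sigma L2m N2M bL bN d a0.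
Proof.
intros Hpa Ha HL HN Hbs Hs Hx Hd HbL HbN HL1c HN1c HL1p HN1p HL2c HN2c HL2p HN2p HL1b HL2b HN1b HN2b HdL HdN.
assert (I1 := qX_int a a0 L1 N1 x Ha HL1c HN1c HL1p).
assert (I2 := qX_int a a0 L2 N2 x Ha HL2c HN2c HL2p).
assert (E : RInt (fun s => qX a a0 L1 N1 s - qX a a0 L2 N2 s) a0 x = RInt (qX a a0 L1 N1) a0 x - RInt (qX a a0 L2 N2) a0 x)
  by (apply (RInt_minus (V:=R_CompleteNormedModule)); auto).
rewrite <- E. unfold Cc.
set (D := Dd beta sigma L2m N2M bL bN d a0).
assert (HD0 : 0 <= D).
{ unfold D, Dd. pose proof (Rpower_pos a0 (beta-1)). pose proof (Rpower_pos a0 (2*beta-sigma-1)).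
  apply Rplus_le_le_0_compat; unfold Rdiv; repeat apply Rmult_le_pos; try lra;
  left; apply Rinv_0_lt_compat; try apply Rmult_lt_0_compat; try lra; nra. }
apply int_bound2; try lra.
- unfold Rdiv; repeat apply Rmult_le_pos; try lra; left; apply Rinv_0_lt_compat; lra.
- unfold Rdiv; repeat apply Rmult_le_pos; try lra; left; apply Rinv_0_lt_compat; nra.
- apply (ex_RInt_minus (V:=R_NormedModule)); auto.
- intros s Hs'. apply q_diff; try lra; auto.
  apply HL1b; lra. apply HL2b; lra. apply HdL; lra.
  + assert (G1 : 0 <= GX a0 L1 N1 s) by (apply (G_bd a0 L1 N1 beta sigma L2m N2M s); auto; lra).
    assert (G2 : 0 <= GX a0 L2 N2 s) by (apply (G_bd a0 L2 N2 beta sigma L2m N2M s); auto; lra).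
    assert (0 < a0 * a) by nra.
    unfold EX. eapply Rle_trans. apply exp_lip. nra. nra.
    replace (a0 * a * GX a0 L1 N1 s - a0 * a * GX a0 L2 N2 s) with ((a0*a) * (GX a0 L1 N1 s - GX a0 L2 N2 s)) by ring.
    rewrite Rabs_mult, (Rabs_right (a0*a)) by nra. apply Rmult_le_compat_l. nra.
    apply G_diff; auto; lra.
  + pose proof (E_bd a a0 L2 N2 beta sigma L2m N2M s) as G; destruct G; auto; try lra.
    split; auto. left; eapply Rlt_le_trans; [apply exp_pos|eauto].
Qed.

Lemma mono_lim (h : R->R) a0 U : (forall x y, a0 <= x -> x <= y -> h x <= h y) ->
  (forall x, a0 <= x -> h x <= U) ->
  exists l : R, is_lim h p_infty l /\ (forall x, a0 <= x -> h x <= l).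
Proof.
intros Hm Hb.
set (E := fun y => exists x, a0 <= x /\ y = h x).
destruct (completeness E) as [m [Hub Hlub]].
{ exists U. intros y [x [Hx ->]]. auto. }
{ exists (h a0). exists a0. split; lra. }
exists m. split.
- apply is_lim_spec. intros eps. simpl.
  assert (Ex : exists x0, a0 <= x0 /\ m - eps < h x0).
  { apply NNPP. intros Hn. assert (m <= m - eps).
    { apply Hlub. intros y [x [Hx ->]].
      destruct (Rle_dec (h x) (m - eps)); auto.
      exfalso. apply Hn. exists x. split; auto. lra. }
    destruct eps; simpl in *; lra. }
  destruct Ex as [x0 [Hx0 Hh]]. exists (Rmax a0 x0). intros y Hy.
  assert (a0 <= y) by (pose proof (Rmax_l a0 x0); lra).
  assert (h x0 <= h y) by (apply Hm; auto; pose proof (Rmax_r a0 x0); lra).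
  assert (h y <= m) by (apply Hub; exists y; split; auto).
  rewrite Rabs_left1 by lra. lra.
- intros x Hx. apply Hub. exists x. split; auto.
Qed.

Lemma lower_lim l c A a0 beta : 0 < c -> 1 <= beta ->
  (forall x, a0 <= x -> 1 <= x -> A - c / Rpower x beta <= l) -> A <= l.
Proof.
intros Hc Hb H. apply Rnot_lt_le. intros Hl.
set (eps := A - l).
set (x := Rmax (Rmax a0 1) (c/eps + 1)).
assert (Hx1 : 1 <= x) by (unfold x; pose proof (Rmax_l (Rmax a0 1) (c/eps+1)); pose proof (Rmax_r a0 1); lra).
assert (Hxa : a0 <= x) by (unfold x; pose proof (Rmax_l (Rmax a0 1) (c/eps+1)); pose proof (Rmax_l a0 1); lra).
assert (Hxc : c/eps + 1 <= x) by (unfold x; apply Rmax_r).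
assert (Hp : x <= Rpower x beta).
{ rewrite <- (Rpower_1 x) at 1 by lra. apply Rle_Rpower; lra. }
assert (0 < eps) by (unfold eps; lra).
assert (0 < c/eps) by (unfold Rdiv; apply Rmult_lt_0_compat; auto; apply Rinv_0_lt_compat; auto).
assert (c / Rpower x beta < eps).
{ apply Rle_lt_trans with (c / (c/eps + 1)).
  unfold Rdiv. apply Rmult_le_compat_l. lra. apply Rinv_le_contravar; lra.
  apply (Rmult_lt_reg_r (c/eps+1)). lra. unfold Rdiv at 1. rewrite Rmult_assoc, Rinv_l by lra.
  replace (eps * (c/eps + 1)) with (c + eps) by (field; lra). lra. }
specialize (H x Hxa Hx1). unfold eps in *. lra.
Qed.

Lemma lim_diff h1 h2 (l1 l2 : R) a0 C : is_lim h1 p_infty l1 -> is_lim h2 p_infty l2 ->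
  (forall x, a0 <= x -> Rabs (h1 x - h2 x) <= C) -> Rabs (l1 - l2) <= C.
Proof.
intros H1 H2 Hb. apply Rnot_lt_le. intros Hl.
assert (Hep : 0 < (Rabs (l1 - l2) - C)/2) by lra.
set (eps := mkposreal _ Hep).
apply is_lim_spec in H1. apply is_lim_spec in H2. unfold is_lim' in H1, H2.
destruct (H1 eps) as [M1 HM1]. destruct (H2 eps) as [M2 HM2].
set (x := Rmax (Rmax M1 M2) a0 + 1).
assert (M1 < x) by (unfold x; pose proof (Rmax_l (Rmax M1 M2) a0); pose proof (Rmax_l M1 M2); lra).
assert (M2 < x) by (unfold x; pose proof (Rmax_l (Rmax M1 M2) a0); pose proof (Rmax_r M1 M2); lra).
assert (a0 <= x) by (unfold x; pose proof (Rmax_r (Rmax M1 M2) a0); lra).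
specialize (HM1 x H). specialize (HM2 x H0). specialize (Hb x H3). simpl in *.
assert (Rabs (l1 - l2) <= Rabs (h1 x - l1) + Rabs (h2 x - l2) + Rabs (h1 x - h2 x)).
{ replace (l1 - l2) with (- (h1 x - l1) + (h2 x - l2) + (h1 x - h2 x)) by ring.
  eapply Rle_trans. apply Rabs_triang. rewrite <- (Rabs_Ropp (h1 x - l1)).
  apply Rplus_le_compat_r. apply Rabs_triang. }
lra.
Qed.

Lemma supnorm_le a0 h B : (forall x, a0 <= x -> Rabs (h x) <= B) -> supnorm a0 h <= B.
Proof.
intros H. unfold supnorm.
destruct (Lub_Rbar_correct (fun y => exists x, a0 <= x /\ y = Rabs (h x))) as [Hub Hl].
assert (Hb : Rbar_le (Lub_Rbar (fun y => exists x, a0 <= x /\ y = Rabs (h x))) (Finite B)).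
{ apply Hl. intros y [x [Hx ->]]. simpl. auto. }
assert (He : Rbar_le (Finite (Rabs (h a0))) (Lub_Rbar (fun y => exists x, a0 <= x /\ y = Rabs (h x)))).
{ apply Hub. exists a0. split; auto; lra. }
destruct (Lub_Rbar (fun y => exists x, a0 <= x /\ y = Rabs (h x))); simpl in *; auto; contradiction.
Qed.

Lemma supnorm_nonneg a0 h : 0 <= supnorm a0 h.
Proof.
unfold supnorm.
destruct (Lub_Rbar_correct (fun y => exists x, a0 <= x /\ y = Rabs (h x))) as [Hub Hl].
assert (He : Rbar_le (Finite (Rabs (h a0))) (Lub_Rbar (fun y => exists x, a0 <= x /\ y = Rabs (h x)))).
{ apply Hub. exists a0. split; auto; lra. }
destruct (Lub_Rbar (fun y => exists x, a0 <= x /\ y = Rabs (h x))); simpl in *; try lra; try contradiction.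
pose proof (Rabs_pos (h a0)); lra.
Qed.

Lemma F2inf_props a LS NS a0 f beta sigma L2m L2M N2M :
  0 < a -> 0 < a0 -> 0 < L2m -> 0 < N2M -> beta > sigma + 2 -> sigma > 0 ->
  contOn a0 (LS f) -> contOn a0 (NS f) -> (forall x, a0<=x -> 0 < LS f x) -> (forall x, a0<=x -> 0 < NS f x) ->
  (forall x, a0 <= x -> L2m * Rpower x beta <= LS f x /\ LS f x <= L2M * Rpower x beta) ->
  (forall x, a0 <= x -> NS f x <= N2M * Rpower x sigma) ->
  is_lim (fun x => F2 a LS NS a0 x f) p_infty (F2inf a LS NS a0 f)
  /\ (forall x, a0 <= x -> F2 a LS NS a0 x f <= F2inf a LS NS a0 f)
  /\ exp (-(a0*a*K0 beta sigma L2m N2M a0)) / L2M / (beta * Rpower a0 beta) <= F2inf a LS NS a0 f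
  /\ (forall x, a0 <= x -> 0 <= F2 a LS NS a0 x f).
Proof.
intros Hpa Ha HL HN Hbs Hs HLc HNc HLp HNp HLb HNb.
set (q := qX a a0 (LS f) (NS f)).
set (k := exp (-(a0*a*K0 beta sigma L2m N2M a0))).
assert (Hk : 0 < k) by apply exp_pos.
assert (HL2M : 0 < L2M) by (destruct (HLb a0 ltac:(lra)); pose proof (Rpower_pos a0 beta); nra).
assert (Hq : forall s, a0 <= s -> k / L2M * Rpower s (-(beta+1)) <= q s /\ q s <= / L2m * Rpower s (-(beta+1))).
{ intros s Hs'. apply q_pt; auto. }
assert (Hq0 : forall s, a0 <= s -> 0 <= q s).
{ intros s Hs'. destruct (Hq s Hs') as [H _]. eapply Rle_trans; [|exact H].
  pose proof (Rpower_pos s (-(beta+1))). unfold Rdiv.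
  apply Rmult_le_pos; [apply Rmult_le_pos|]; try lra. left; apply Rinv_0_lt_compat; lra. }
assert (Iq : forall x y, ex_RInt q x y).
{ intros. apply (ex_RInt_continuous (V:=R_CompleteNormedModule)). intros; apply qX_cont; auto. }
assert (Hnn : forall x, a0 <= x -> 0 <= F2 a LS NS a0 x f).
{ intros x Hx. rewrite F2_eq by auto. fold q. apply RInt_ge_0; auto. intros s Hs'; apply Hq0; lra. }
assert (Hmono : forall x y, a0 <= x -> x <= y -> F2 a LS NS a0 x f <= F2 a LS NS a0 y f).
{ intros x y Hx Hy. rewrite !F2_eq by lra. fold q.
  rewrite <- (RInt_Chasles (V:=R_CompleteNormedModule) q a0 x y) by auto.
  assert (0 <= RInt q x y) by (apply RInt_ge_0; auto; intros s Hs'; apply Hq0; lra).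
  change (plus (RInt q a0 x) (RInt q x y)) with (RInt q a0 x + RInt q x y). lra. }
assert (Hbd : forall x, a0 <= x -> F2 a LS NS a0 x f <= / L2m / ((beta+1-1) * Rpower a0 (beta+1-1))).
{ intros x Hx. rewrite F2_eq by auto. fold q.
  pose proof (int_bound2 q a0 x (/L2m) 0 (beta+1) 2 ltac:(lra) ltac:(lra) Ha Hx) as H.
  assert (0 <= /L2m) by (left; apply Rinv_0_lt_compat; lra).
  specialize (H ltac:(lra) ltac:(lra) (Iq a0 x)).
  assert (Hb : Rabs (RInt q a0 x) <= / L2m / ((beta + 1 - 1) * Rpower a0 (beta + 1 - 1)) + 0 / ((2 - 1) * Rpower a0 (2 - 1))).
  { apply H. intros s Hs'. destruct (Hq s ltac:(lra)). rewrite Rabs_right. lra. apply Rle_ge, Hq0; lra. }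
  replace (0 / ((2 - 1) * Rpower a0 (2 - 1))) with 0 in Hb by (unfold Rdiv; ring). rewrite Rplus_0_r in Hb.
  eapply Rle_trans; [apply Rle_abs|exact Hb]. }
destruct (mono_lim _ a0 _ Hmono Hbd) as [l [Hl Hle]].
assert (Hinf : F2inf a LS NS a0 f = l).
{ unfold F2inf. rewrite (is_lim_unique _ _ _ Hl). reflexivity. }
rewrite Hinf. split; [exact Hl|]. split; [exact Hle|]. split; [|exact Hnn].
pose proof (Rpower_pos a0 beta).
apply (lower_lim l (k / L2M / beta) _ a0 beta).
{ unfold Rdiv. apply Rmult_lt_0_compat; [apply Rmult_lt_0_compat|]; try apply Rinv_0_lt_compat; lra. }
lra.
intros x Hx Hx1. eapply Rle_trans; [|apply (Hle x Hx)]. rewrite F2_eq by auto. fold q.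
pose proof (pow_is_int (beta+1) a0 x ltac:(lra) Ha Hx) as HI.
assert (HI2 : is_RInt (fun s => k / L2M * Rpower s (-(beta+1))) a0 x
   (k / L2M * ((Rpower x (1 - (beta + 1)) - Rpower a0 (1 - (beta + 1))) / (1 - (beta + 1))))).
{ apply (is_RInt_scal (fun s => Rpower s (-(beta+1)))). exact HI. }
eapply Rle_trans; [|apply (RInt_le (fun s => k / L2M * Rpower s (-(beta+1))))]; auto.
- rewrite (is_RInt_unique _ _ _ _ HI2).
  replace (1 - (beta+1)) with (-beta) by ring. rewrite !Rpower_Ropp.
  pose proof (Rpower_pos x beta). right. field. repeat split; lra.
- eexists; exact HI2.
- intros s Hs'. apply Hq; lra.
Qed.

Theorem lemma4
  (a beta sigma L2m L2M N2m N2M barL2 barN2 a0 : R)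
  (LS NS : (R -> R) -> (R -> R))
  (ha : 0 < a) (ha0 : 0 < a0)
  (hbeta : 0 < beta) (hsigma : 0 < sigma)
  (hL2m : 0 < L2m) (hL2M : 0 < L2M) (hN2m : 0 < N2m) (hN2M : 0 < N2M)
  (hbs : beta > sigma + 2)
  (hbarL2 : 0 <= barL2) (hbarN2 : 0 <= barN2)
  (hLcont : forall f2, inM a0 f2 -> contOn a0 (LS f2))
  (hNcont : forall f2, inM a0 f2 -> contOn a0 (NS f2))
  (hLpos : forall f2, inM a0 f2 -> forall xi, a0 <= xi -> 0 < LS f2 xi)
  (hNpos : forall f2, inM a0 f2 -> forall xi, a0 <= xi -> 0 < NS f2 xi)
  (H1L : forall f2, inM a0 f2 -> forall xi, a0 <= xi ->
           L2m * Rpower xi beta <= LS f2 xi /\ LS f2 xi <= L2M * Rpower xi beta)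
  (H1N : forall f2, inM a0 f2 -> forall xi, a0 <= xi ->
           N2m * Rpower xi sigma <= NS f2 xi /\ NS f2 xi <= N2M * Rpower xi sigma)
  (H2L : forall f2 f2s, inM a0 f2 -> inM a0 f2s ->
           forall s, a0 <= s ->
           Rabs (LS f2 s - LS f2s s) <= barL2 * supnorm a0 (fun s => f2 s - f2s s))
  (H2N : forall f2 f2s, inM a0 f2 -> inM a0 f2s ->
           forall s, a0 <= s ->
           Rabs (NS f2 s - NS f2s s) <= barN2 * supnorm a0 (fun s => f2 s - f2s s))
  (f2 f2s : R -> R) (hf2 : inM a0 f2) (hf2s : inM a0 f2s) :
  supnorm a0 (fun xi => W a LS NS a0 f2 xi - W a LS NS a0 f2s xi)
    <= phihat a beta sigma L2m L2M N2M barL2 barN2 a0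
       * supnorm a0 (fun xi => f2 xi - f2s xi).
Proof.
set (d := supnorm a0 (fun xi => f2 xi - f2s xi)).
assert (Hd : 0 <= d) by apply supnorm_nonneg.
set (C := Cc a beta sigma L2m N2M barL2 barN2 d a0).
set (k := exp (-(a0*a*K0 beta sigma L2m N2M a0))).
assert (Hk : 0 < k) by apply exp_pos.
destruct (F2inf_props a LS NS a0 f2 beta sigma L2m L2M N2M) as [Lm1 [Le1 [Lo1 Nn1]]]; auto.
{ intros; apply H1N; auto. }
destruct (F2inf_props a LS NS a0 f2s beta sigma L2m L2M N2M) as [Lm2 [Le2 [Lo2 Nn2]]]; auto.
{ intros; apply H1N; auto. }
fold k in Lo1, Lo2.
set (l1 := F2inf a LS NS a0 f2) in *. set (l2 := F2inf a LS NS a0 f2s) in *.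
assert (HF : forall x, a0 <= x -> Rabs (F2 a LS NS a0 x f2 - F2 a LS NS a0 x f2s) <= C).
{ intros x Hx. rewrite !F2_eq by auto. apply F_diff; auto; try lra.
  all: intros y Hy.
  all: first [apply (H1L _ hf2 y Hy) | apply (H1L _ hf2s y Hy) | apply (H1N _ hf2 y Hy) | apply (H1N _ hf2s y Hy)
             | apply (H2L _ _ hf2 hf2s y Hy) | apply (H2N _ _ hf2 hf2s y Hy) ]. }
assert (Hl : Rabs (l1 - l2) <= C) by (apply (lim_diff _ _ _ _ a0 C Lm1 Lm2 HF)).
assert (HA : 0 < Rpower a0 beta) by apply Rpower_pos.
assert (Hlow : 0 < k / L2M / (beta * Rpower a0 beta)).
{ unfold Rdiv. apply Rmult_lt_0_compat; [apply Rmult_lt_0_compat|]; auto.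
  apply Rinv_0_lt_compat; lra. apply Rinv_0_lt_compat; apply Rmult_lt_0_compat; lra. }
assert (Hl1 : 0 < l1) by lra. assert (Hl2 : 0 < l2) by lra.
assert (HC : 0 <= C) by (eapply Rle_trans; [apply Rabs_pos|exact Hl]).
assert (Key : forall xi, a0 <= xi -> Rabs (W a LS NS a0 f2 xi - W a LS NS a0 f2s xi) <= 2 * C / l1).
{ intros xi Hxi. unfold W. fold l1 l2.
  specialize (HF xi Hxi). specialize (Le2 xi Hxi). specialize (Nn2 xi Hxi).
  set (F1 := F2 a LS NS a0 xi f2) in *. set (G := F2 a LS NS a0 xi f2s) in *.
  replace (- (F1 / l1) - - (G / l2)) with ((G - F1) / l1 + (G / l2) * ((l1 - l2) / l1)) by (field; lra).
  eapply Rle_trans; [apply Rabs_triang|].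
  rewrite Rabs_mult.
  assert (Rabs (G / l2) <= 1).
  { rewrite Rabs_right. apply (Rmult_le_reg_r l2); auto. unfold Rdiv; rewrite Rmult_assoc, Rinv_l by lra. lra.
    apply Rle_ge. unfold Rdiv. apply Rmult_le_pos; auto. left; apply Rinv_0_lt_compat; auto. }
  assert (Rabs ((G - F1)/l1) <= C / l1).
  { apply div_bd; try lra. rewrite Rabs_minus_sym; auto. }
  assert (Rabs ((l1 - l2)/l1) <= C / l1) by (apply div_bd; lra).
  assert (Rabs (G/l2) * Rabs ((l1 - l2) / l1) <= 1 * (C / l1)).
  { apply Rmult_le_compat; auto; apply Rabs_pos. }
  replace (2 * C / l1) with (C / l1 + C / l1) by (field; lra). lra. }
apply supnorm_le. intros xi Hxi. eapply Rle_trans; [apply Key; auto|].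
apply Rle_trans with (2 * C / (k / L2M / (beta * Rpower a0 beta))).
{ unfold Rdiv at 1 2. apply Rmult_le_compat_l. lra. apply Rinv_le_contravar; auto. }
assert (EK : a0*a*K0 beta sigma L2m N2M a0 = a * N2M / (L2m * (beta - sigma - 1)) * / Rpower a0 (beta - sigma - 2)).
{ unfold K0. replace (beta - sigma - 1) with ((beta - sigma - 2) + 1) at 2 by ring.
  rewrite Rpower_plus, Rpower_1 by lra. pose proof (Rpower_pos a0 (beta-sigma-2)).
  replace (beta - sigma - 2 + 1 - 1) with (beta - sigma - 2) by ring.
  field. repeat split; lra. }
assert (EC : C = barF2 a beta sigma L2m N2M barL2 barN2 a0 * d).
{ unfold C, Cc, Dd, barF2.
  replace (beta+1-1) with beta by ring. replace (2*beta+1-1) with (2*beta) by ring.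
  pose proof (Rpower_pos a0 (beta-1)). pose proof (Rpower_pos a0 (2*beta-sigma-1)).
  pose proof (Rpower_pos a0 (2*beta)).
  field. repeat split; lra. }
right. unfold phihat. rewrite EC. unfold k. rewrite EK, exp_Ropp.
pose proof (exp_pos (a * N2M / (L2m * (beta - sigma - 1)) * / Rpower a0 (beta - sigma - 2))).
field. repeat split; lra.
Qed.
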